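(* Let $a<b$, $n\ge 1$, and let $\{(\tau_k,\omega_k)\}_{k=1}^{2n+1}$ be the nodes and weights of the Gaussian quadrature rule for $S^n_{5,1}$ on the uniform knot sequence $x_k=a+k(b-a)/n$. Then for every $f\in C^6[a,b]$ there is $\xi\in[a,b]$ such that $$\int_a^b f(t)\,dt-\sum_{k=1}^{2n+1}\omega_k f(\tau_k)=c_{2n+1,6}\,f^{(6)}(\xi),\qquad c_{2n+1,6}=\frac{(b-a)^7}{5040}-\frac1{720}\sum_{k=1}^{2n+1}\omega_k(\tau_k-a)^6,$$ and $c_{2n+1,6}>0$.
   Context: $S^n_{5,1}=\{f\in C^1[a,b]:\ f|_{(x_{k-1},x_k)}\text{ is a polynomial of degree}\le 5,\ k=1,\dots,n\}$. A Gaussian quadrature rule for $S^n_{5,1}$ is a rule with $2n+1$ distinct nodes in $[a,b]$ and positive weights that integrates every $f\in S^n_{5,1}$ exactly over $[a,b]$ ($2n+1$ being the minimal possible number of nodes). *)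

(* Defs.v *)
From Stdlib Require Import Reals.
Open Scope R_scope.

Definition knot (a b : R) (n k : nat) : R := a + INR k * (b - a) / INR n.

Definition C1 (f : R -> R) : Prop :=
  exists f' : R -> R, (forall x, derivable_pt_lim f x (f' x)) /\ continuity f'.

Definition Cm_derivs (m : nat) (f : R -> R) (d : nat -> R -> R) : Prop :=
  (forall x, d 0%nat x = f x) /\
  (forall k x, (k < m)%nat -> derivable_pt_lim (d k) x (d (S k) x)) /\
  continuity (d m).

Definition in_S51 (a b : R) (n : nat) (g : R -> R) : Prop :=
  C1 g /\
  forall k : nat, (1 <= k <= n)%nat ->
    exists c : nat -> R, forall t,
      knot a b n (k - 1) < t < knot a b n k ->
      g t = sum_f_R0 (fun i => c i * t ^ i) 5.

Definition quad_sum (m : nat) (tau w : nat -> R) (g : R -> R) : R :=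
  sum_f_R0 (fun k => w (S k) * g (tau (S k))) (m - 1).

Definition integral_is (g : R -> R) (a b I : R) : Prop :=
  exists pr : Riemann_integrable g a b, RiemannInt pr = I.

Definition gauss_rule_S51 (a b : R) (n : nat) (tau w : nat -> R) : Prop :=
  (forall i, (1 <= i <= 2 * n + 1)%nat -> a <= tau i <= b) /\
  (forall i j, (1 <= i <= 2 * n + 1)%nat -> (1 <= j <= 2 * n + 1)%nat ->
     i <> j -> tau i <> tau j) /\
  (forall i, (1 <= i <= 2 * n + 1)%nat -> 0 < w i) /\
  (forall g, in_S51 a b n g -> integral_is g a b (quad_sum (2 * n + 1) tau w g)).

Definition c_err (a b : R) (n : nat) (tau w : nat -> R) : R :=
  (b - a) ^ 7 / 5040 - / 720 * quad_sum (2 * n + 1) tau w (fun t => (t - a) ^ 6).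

(* Main.v *)
Require Import Defs.
From Coquelicot Require Import Coquelicot.
From Stdlib Require Import Reals Lra Lia List Wf_nat.
Open Scope R_scope.

Definition pp (x : R) : R := Rmax 0 x.

Lemma pp_pos x : 0 <= x -> pp x = x.
Proof. intro; unfold pp; apply Rmax_right; lra. Qed.
Lemma pp_neg x : x <= 0 -> pp x = 0.
Proof. intro; unfold pp; apply Rmax_left; lra. Qed.
Lemma pp_ge0 x : 0 <= pp x.
Proof. unfold pp; apply Rmax_l. Qed.
Lemma pp_abs x : pp x = (x + Rabs x) / 2.
Proof.
  destruct (Rle_dec 0 x).
  - rewrite pp_pos, Rabs_right; lra.
  - rewrite pp_neg, Rabs_left; lra.
Qed.

Lemma pp_cont : continuity pp.
Proof.
  intro x. apply continuity_pt_ext with (f := fun x => (x + Rabs x) / 2).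
  - intro; symmetry; apply pp_abs.
  - unfold Rdiv. apply continuity_pt_mult.
    + apply continuity_pt_plus. apply derivable_continuous_pt, derivable_pt_id.
      apply Rcontinuity_abs.
    + apply continuity_pt_const. intros ? ?; reflexivity.
Qed.

Lemma dlim_loc (f g : R -> R) x l (d : R) : 0 < d ->
  (forall y, Rabs (y - x) < d -> f y = g y) ->
  derivable_pt_lim g x l -> derivable_pt_lim f x l.
Proof.
  intros Hd Heq Hg eps He. destruct (Hg eps He) as [del Hdel].
  assert (Hm : 0 < Rmin del d) by (apply Rmin_pos; [apply cond_pos| lra]).
  exists (mkposreal _ Hm). intros h Hh Hlt. simpl in Hlt.
  rewrite !Heq.
  - apply Hdel; auto. apply Rlt_le_trans with (1 := Hlt), Rmin_l.
  - unfold Rminus; rewrite Rplus_opp_r, Rabs_R0; lra.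
  - replace (x + h - x) with h by ring. apply Rlt_le_trans with (1 := Hlt), Rmin_r.
Qed.

Lemma pow_le1 h m : 0 <= h <= 1 -> h ^ m <= 1.
Proof.
  intros [H0 H1]. induction m. simpl; lra.
  simpl. replace 1 with (1 * 1) by ring. apply Rmult_le_compat; auto. apply pow_le; auto.
Qed.
Lemma pow_le_self h m : 0 <= h <= 1 -> h ^ S m <= h.
Proof.
  intros H. change (h ^ S m) with (h * h ^ m). assert (h ^ m <= 1) by (apply pow_le1; auto).
  nra.
Qed.

Lemma pp_pow_deriv m x :
  derivable_pt_lim (fun y => pp y ^ (S (S m))) x (INR (S (S m)) * pp x ^ (S m)).
Proof.
  destruct (Rtotal_order x 0) as [Hx|[Hx|Hx]].
  - rewrite pp_neg by lra. rewrite pow_i by lia. rewrite Rmult_0_r.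
    apply dlim_loc with (g := fun _ => 0) (d := - x). lra.
    intros y Hy. rewrite pp_neg. rewrite pow_i by lia; auto.
    apply Rabs_def2 in Hy; lra.
    apply derivable_pt_lim_const.
  - subst. rewrite pp_neg by lra. rewrite pow_i by lia. rewrite Rmult_0_r.
    intros eps He. assert (Hm : 0 < Rmin eps 1) by (apply Rmin_pos; lra).
    exists (mkposreal _ Hm). intros h Hh Hlt. simpl in Hlt.
    rewrite Rplus_0_l, (pp_neg 0) by lra. rewrite (pow_i (S (S m))) by lia.
    destruct (Rle_dec h 0).
    + rewrite pp_neg, pow_i by (auto; lia). replace ((0 - 0) / h - 0) with 0 by (field; lra). rewrite Rabs_R0; lra.
    + rewrite pp_pos by lra. apply Rabs_def2 in Hlt. 
      assert (h < eps) by (apply Rlt_le_trans with (Rmin eps 1); [lra| apply Rmin_l]).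
      assert (h < 1) by (apply Rlt_le_trans with (Rmin eps 1); [lra| apply Rmin_r]).
      replace ((h ^ S (S m) - 0) / h - 0) with (h ^ S m).
      2: { simpl. field. lra. }
      rewrite Rabs_right. apply Rle_lt_trans with h; auto. apply pow_le_self; lra.
      apply Rle_ge, pow_le; lra.
  - rewrite (pp_pos x) by lra.
    apply dlim_loc with (g := fun y => y ^ S (S m)) (d := x). lra.
    intros y Hy. rewrite pp_pos; auto. apply Rabs_def2 in Hy; lra.
    replace (S m) with (Init.Nat.pred (S (S m))) at 2 by reflexivity.
    apply derivable_pt_lim_pow.
Qed.

Definition kp (p : nat) (c t : R) : R := pp (c - t) ^ p.

Lemma kp_deriv m c t :
  derivable_pt_lim (kp (S (S m)) c) t (- INR (S (S m)) * kp (S m) c t).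
Proof.
  unfold kp.
  assert (Hc : derivable_pt_lim (fun t => c - t) t (-1)).
  { apply is_derive_Reals. auto_derive; auto; ring. }
  assert (H := derivable_pt_lim_comp (fun t => c - t) (fun y => pp y ^ S (S m)) t (-1) _
    Hc (pp_pow_deriv m (c - t))).
  unfold comp in H.
  replace (- INR (S (S m)) * pp (c - t) ^ S m) with (INR (S (S m)) * pp (c - t) ^ S m * -1) by ring.
  exact H.
Qed.

Lemma cont_pt_pow (f : R -> R) x p : continuity_pt f x -> continuity_pt (fun t => f t ^ p) x.
Proof.
  intro H. induction p.
  - simpl. apply continuity_pt_const. intros ? ?; auto.
  - simpl. apply (continuity_pt_mult f (fun t => f t ^ p)); auto.
Qed.

Lemma kp_cont p c : continuity (kp p c).
Proof.
  intro t. unfold kp. apply (cont_pt_pow (fun t => pp (c - t))).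
  apply (continuity_pt_comp (fun t => c - t) pp).
  apply continuity_pt_minus. apply continuity_pt_const; intros ? ?; auto.
  apply derivable_continuous_pt, derivable_pt_id. apply pp_cont.
Qed.
Lemma root_between (f : R -> R) p q : continuity f -> p < q -> f p * f q < 0 ->
  exists z, p < z < q /\ f z = 0.
Proof.
  intros Hc Hpq Hs.
  destruct (Rlt_dec (f p) 0) as [Hp|Hp].
  - assert (0 < f q) by nra.
    destruct (IVT f p q Hc Hpq Hp H) as [z [Hz1 Hz2]]. exists z; split; auto.
    destruct Hz1 as [Ha1 Ha2]. split.
    + destruct Ha1; auto. subst; lra.
    + destruct Ha2; auto. subst; lra.
  - assert (f p <> 0) by (intro E; rewrite E in Hs; lra).
    assert (0 < f p) by lra. assert (f q < 0) by nra.
    assert (Hc' : continuity (fun x => - f x)) by (apply continuity_opp; auto).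
    destruct (IVT (fun x => - f x) p q Hc' Hpq) as [z [Hz1 Hz2]]; try lra.
    exists z; split; [|lra].
    destruct Hz1 as [Ha1 Ha2]. split.
    + destruct Ha1; auto. subst; lra.
    + destruct Ha2; auto. subst; lra.
Qed.

Fixpoint incr (l : list R) : Prop :=
  match l with
  | nil => True
  | x :: l' => (forall y, In y l' -> x < y) /\ incr l'
  end.

Lemma incr_app l1 l2 : incr l1 -> incr l2 -> (forall x y, In x l1 -> In y l2 -> x < y) ->
  incr (l1 ++ l2).
Proof.
  induction l1 as [|x l1 IH]; simpl; auto.
  intros [H1 H2] H3 H4. split.
  - intros y Hy. apply in_app_or in Hy. destruct Hy; auto.
  - apply IH; auto.
Qed.

Section Comb.
Variables (a b : R) (n : nat) (T W : nat -> R).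
Hypothesis hab : a < b.
Hypothesis hn : (1 <= n)%nat.
Hypothesis HT : forall k, (k <= 2 * n)%nat -> a <= T k <= b.
Hypothesis HW : forall k, (k <= 2 * n)%nat -> 0 < W k.
Hypothesis E0 : sum_f_R0 (fun k => W k) (2 * n) = b - a.
Hypothesis E1 : sum_f_R0 (fun k => W k * (T k - a)) (2 * n) = (b - a) ^ 2 / 2.

Definition Sp p t := sum_f_R0 (fun k => W k * kp p (T k) t) (2 * n).

Hypothesis ES : forall j p, (j <= n)%nat -> (2 <= p <= 5)%nat ->
  Sp p (knot a b n j) = (b - knot a b n j) ^ (S p) / INR (S p).

Definition K0 t := / 720 * (b - t) ^ 6 + - / 120 * Sp 5 t.
Definition K1 t := - / 120 * (b - t) ^ 5 + / 24 * Sp 4 t.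
Definition K2 t := / 24 * (b - t) ^ 4 + - / 6 * Sp 3 t.
Definition K3 t := - / 6 * (b - t) ^ 3 + / 2 * Sp 2 t.
Definition H t := / 2 * (b - t) ^ 2 + - 1 * Sp 1 t.

Lemma Sp_deriv m t : derivable_pt_lim (Sp (S (S m))) t (- INR (S (S m)) * Sp (S m) t).
Proof.
  unfold Sp. generalize (2 * n)%nat as N. induction N.
  - cbn [sum_f_R0]. replace (- INR (S (S m)) * (W 0%nat * kp (S m) (T 0%nat) t))
      with (W 0%nat * (- INR (S (S m)) * kp (S m) (T 0%nat) t)) by ring.
    apply (derivable_pt_lim_scal (kp (S (S m)) (T 0%nat))). apply kp_deriv.
  - cbn [sum_f_R0]. rewrite Rmult_plus_distr_l.
    apply (derivable_pt_lim_plus (fun t => sum_f_R0 (fun k => W k * kp (S (S m)) (T k) t) N)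
      (fun t => W (S N) * kp (S (S m)) (T (S N)) t)); auto.
    replace (- INR (S (S m)) * (W (S N) * kp (S m) (T (S N)) t))
      with (W (S N) * (- INR (S (S m)) * kp (S m) (T (S N)) t)) by ring.
    apply (derivable_pt_lim_scal (kp (S (S m)) (T (S N)))). apply kp_deriv.
Qed.

Lemma Kgen p m al be t :
  derivable_pt_lim (fun t => al * (b - t) ^ (S p) + be * Sp (S (S m)) t) t
    (al * (- INR (S p) * (b - t) ^ p) + be * (- INR (S (S m)) * Sp (S m) t)).
Proof.
  apply (derivable_pt_lim_plus (fun t => al * (b - t) ^ (S p)) (fun t => be * Sp (S (S m)) t)).
  - apply is_derive_Reals. auto_derive; auto. rewrite S_INR. unfold Rminus. destruct p; simpl; ring.
  - apply (derivable_pt_lim_scal (Sp (S (S m)))). apply Sp_deriv.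
Qed.

Lemma K0_d t : derivable_pt_lim K0 t (K1 t).
Proof.
  unfold K0. replace (K1 t) with (/ 720 * (- INR 6 * (b - t) ^ 5) + - / 120 * (- INR 5 * Sp 4 t)).
  apply (Kgen 5 3). unfold K1. simpl INR. field.
Qed.
Lemma K1_d t : derivable_pt_lim K1 t (K2 t).
Proof.
  unfold K1. replace (K2 t) with (- / 120 * (- INR 5 * (b - t) ^ 4) + / 24 * (- INR 4 * Sp 3 t)).
  apply (Kgen 4 2). unfold K2. simpl INR. field.
Qed.
Lemma K2_d t : derivable_pt_lim K2 t (K3 t).
Proof.
  unfold K2. replace (K3 t) with (/ 24 * (- INR 4 * (b - t) ^ 3) + - / 6 * (- INR 3 * Sp 2 t)).
  apply (Kgen 3 1). unfold K3. simpl INR. field.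
Qed.
Lemma K3_d t : derivable_pt_lim K3 t (H t).
Proof.
  unfold K3. replace (H t) with (- / 6 * (- INR 3 * (b - t) ^ 2) + / 2 * (- INR 2 * Sp 1 t)).
  apply (Kgen 2 0). unfold H. simpl INR. field.
Qed.

Lemma Sp_cont p : continuity (Sp p).
Proof.
  unfold Sp. generalize (2 * n)%nat as N. induction N; intro t; simpl.
  - apply continuity_pt_mult. apply continuity_pt_const; intros ? ?; auto. apply kp_cont.
  - apply (continuity_pt_plus (fun t => sum_f_R0 (fun k => W k * kp p (T k) t) N)
      (fun t => W (S N) * kp p (T (S N)) t)); auto.
    apply continuity_pt_mult. apply continuity_pt_const; intros ? ?; auto. apply kp_cont.
Qed.

Lemma H_cont : continuity H.
Proof.
  intro t. unfold H. apply (continuity_pt_plus (fun t => / 2 * (b - t) ^ 2) (fun t => -1 * Sp 1 t)).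
  - apply derivable_continuous_pt. apply (derivable_pt_scal (fun t => (b - t) ^ 2)).
    exists (- INR 2 * (b - t) ^ 1). apply is_derive_Reals. auto_derive; auto. simpl; ring.
  - apply continuity_pt_mult. apply continuity_pt_const; intros ? ?; auto. apply Sp_cont.
Qed.

Lemma K3_cont : continuity K3.
Proof. intro t. apply derivable_continuous_pt. exists (H t). apply K3_d. Qed.
Lemma K2_cont : continuity K2.
Proof. intro t. apply derivable_continuous_pt. exists (K3 t). apply K2_d. Qed.
Lemma K1_cont : continuity K1.
Proof. intro t. apply derivable_continuous_pt. exists (K2 t). apply K1_d. Qed.
Lemma K0_cont : continuity K0.
Proof. intro t. apply derivable_continuous_pt. exists (K1 t). apply K0_d. Qed.

Lemma K_knot j : (j <= n)%nat ->
  K0 (knot a b n j) = 0 /\ K1 (knot a b n j) = 0 /\ K2 (knot a b n j) = 0 /\ K3 (knot a b n j) = 0.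
Proof.
  intro Hj. unfold K0, K1, K2, K3.
  rewrite !ES by (auto; lia). simpl INR. repeat split; field.
Qed.


Lemma kp1_ge c t : t <= c -> kp 1 c t = c - t.
Proof. intro; unfold kp; rewrite pp_pos by lra; ring. Qed.
Lemma kp1_le c t : c <= t -> kp 1 c t = 0.
Proof. intro; unfold kp; rewrite pp_neg by lra; ring. Qed.

Lemma H_left t : (forall k, (k <= 2 * n)%nat -> t <= T k) -> H t = (t - a) ^ 2 / 2.
Proof.
  intro Ht. unfold H, Sp.
  rewrite (sum_eq _ (fun k => W k * (T k - a) + W k * (a - t))).
  2: { intros i Hi. rewrite kp1_ge by auto. ring. }
  rewrite plus_sum, E1.
  rewrite <- (scal_sum W (2 * n) (a - t)). rewrite Rmult_comm.
  replace (sum_f_R0 W (2 * n)) with (b - a) by (rewrite <- E0; auto). field.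
Qed.

Lemma sum_zero N : sum_f_R0 (fun _ => 0) N = 0.
Proof. induction N; simpl; auto; lra. Qed.

Lemma H_right t : (forall k, (k <= 2 * n)%nat -> T k <= t) -> H t = (b - t) ^ 2 / 2.
Proof.
  intro Ht. unfold H, Sp.
  rewrite (sum_eq _ (fun _ => 0)). rewrite sum_zero. field.
  intros i Hi. rewrite kp1_le by auto. ring.
Qed.

Lemma H_a : H a = 0.
Proof. rewrite H_left. simpl; field. intros k Hk; apply HT; auto. Qed.

Lemma H_quad r s u : r < s < u -> (forall k, (k <= 2 * n)%nat -> T k <= r \/ u <= T k) ->
  H r = 0 -> H s = 0 -> H u = 0 -> False.
Proof.
  intros Hrs Hk Hr Hs Hu.
  set (c := fun k => if Rle_dec u (T k) then 1 else 0).
  set (A := sum_f_R0 (fun k => W k * c k * T k) (2 * n)).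
  set (B := sum_f_R0 (fun k => W k * c k) (2 * n)).
  assert (HS : forall t, r <= t <= u -> H t = (b - t) ^ 2 / 2 - A + B * t).
  { intros t Ht. unfold H, Sp.
    rewrite (sum_eq _ (fun k => W k * c k * T k - W k * c k * t)).
    - rewrite minus_sum.
      rewrite <- (scal_sum (fun k => W k * c k) (2 * n) t). fold A B. field.
    - intros i Hi. unfold c. destruct (Rle_dec u (T i)).
      + rewrite kp1_ge by lra. ring.
      + rewrite kp1_le. ring. destruct (Hk i Hi); lra. }
  rewrite HS in Hr, Hs, Hu by lra.
  assert (E : (s - r) * (2 * b - r - s - 2 * B) = 0).
  { replace ((s - r) * (2 * b - r - s - 2 * B)) with
      (2 * ((b - r) ^ 2 / 2 - A + B * r) - 2 * ((b - s) ^ 2 / 2 - A + B * s)) by field.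
    rewrite Hr, Hs; ring. }
  assert (E' : (u - s) * (2 * b - s - u - 2 * B) = 0).
  { replace ((u - s) * (2 * b - s - u - 2 * B)) with
      (2 * ((b - s) ^ 2 / 2 - A + B * s) - 2 * ((b - u) ^ 2 / 2 - A + B * u)) by field.
    rewrite Hu, Hs; ring. }
  apply Rmult_integral in E. apply Rmult_integral in E'.
  destruct E; destruct E'; lra.
Qed.

Lemma node_right r : a <= r < b -> H r = 0 -> exists k, (k <= 2 * n)%nat /\ r <= T k.
Proof.
  intros Hr H0. destruct (Classical_Prop.classic (exists k, (k <= 2 * n)%nat /\ r <= T k)) as [E|E]; auto.
  exfalso. rewrite H_right in H0. 
  - assert (0 < (b - r) ^ 2) by (apply pow_lt; lra). lra.
  - intros k Hk. destruct (Rle_dec r (T k)); [exfalso; apply E; eauto| lra].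
Qed.

Lemma node_left r : a < r -> H r = 0 -> exists k, (k <= 2 * n)%nat /\ T k < r.
Proof.
  intros Hr H0. destruct (Classical_Prop.classic (exists k, (k <= 2 * n)%nat /\ T k < r)) as [E|E]; auto.
  exfalso. rewrite H_left in H0.
  - assert (0 < (r - a) ^ 2) by (apply pow_lt; lra). lra.
  - intros k Hk. destruct (Rlt_dec (T k) r); [exfalso; apply E; eauto| lra].
Qed.

Lemma node_mid r s u : r < s < u -> H r = 0 -> H s = 0 -> H u = 0 ->
  exists k, (k <= 2 * n)%nat /\ r < T k < u.
Proof.
  intros Hrs Hr Hs Hu. destruct (Classical_Prop.classic (exists k, (k <= 2 * n)%nat /\ r < T k < u)) as [E|E]; auto.
  exfalso. apply (H_quad r s u); auto.
  intros k Hk. destruct (Rle_dec (T k) r); auto. destruct (Rle_dec u (T k)); auto.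
  exfalso; apply E; exists k; split; auto; lra.
Qed.

Lemma chain m : forall l r, (length l <= m)%nat -> incr (r :: l) ->
  (forall x, In x (r :: l) -> H x = 0 /\ a <= x < b) ->
  exists ks, (S (length l) <= 2 * length ks)%nat /\ (forall k, In k ks -> (k <= 2 * n)%nat) /\
    incr (map T ks) /\ (forall k, In k ks -> r <= T k) /\ (l <> nil -> forall k, In k ks -> r < T k).
Proof.
  induction m as [m IH] using lt_wf_ind.
  intros l r Hl Hinc Hroot.
  destruct l as [|s l'].
  - destruct (node_right r) as [k [Hk1 Hk2]]. apply Hroot; simpl; auto. apply Hroot; simpl; auto.
    exists (k :: nil). simpl. repeat split; auto.
    + intros k' [E|[]]; subst; auto.
    + intros y [].
    + intros k' [E|[]]; subst; auto.
    + intros E; exfalso; apply E; auto.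
  - destruct l' as [|u l''].
    + destruct (node_right s) as [k [Hk1 Hk2]]. apply Hroot; simpl; auto. apply Hroot; simpl; auto.
      exists (k :: nil). simpl in *. destruct Hinc as [Hi1 _]. assert (r < s) by auto.
      repeat split; auto.
      * intros k' [E|[]]; subst; auto.
      * intros y [].
      * intros k' [E|[]]; subst; lra.
      * intros _ k' [E|[]]; subst; lra.
    + simpl in Hinc. destruct Hinc as [Hi1 [Hi2 Hi3]].
      assert (r < s) by auto. assert (s < u) by auto.
      destruct (node_mid r s u) as [k [Hk1 Hk2]]; auto.
      apply Hroot; simpl; auto. apply Hroot; simpl; auto. apply Hroot; simpl; auto.
      destruct (IH (length l'') ltac:(simpl in Hl; lia) l'' u (le_n _) Hi3) as [ks [K1 [K2 [K3 [K4 _]]]]].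
      { intros x Hx. apply Hroot. simpl in Hx |- *. tauto. }
      exists (k :: ks). simpl in *. repeat split.
      * lia.
      * intros k' [E|E]; subst; auto.
      * intros y Hy. apply in_map_iff in Hy. destruct Hy as [k' [E Hk']]. subst. 
        specialize (K4 k' Hk'). lra.
      * auto.
      * intros k' [E|E]; subst. lra. specialize (K4 k' E). lra.
      * intros _ k' [E|E]; subst. lra. specialize (K4 k' E). lra.
Qed.

Lemma nodup_incr (ks : list nat) : incr (map T ks) -> NoDup ks.
Proof.
  induction ks as [|k ks IH]; simpl; intros.
  - constructor.
  - destruct H0 as [H1 H2]. constructor; auto.
    intro Hin. assert (T k < T k). apply H1. apply in_map; auto. lra.
Qed.

Lemma few_nodes ks : NoDup ks -> (forall k, In k ks -> (k <= 2 * n)%nat) -> (length ks <= S (2 * n))%nat.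
Proof.
  intros Hnd Hk. replace (S (2 * n)) with (length (seq 0 (S (2 * n)))) by apply length_seq.
  apply NoDup_incl_length; auto. intros k Hin. apply in_seq. specialize (Hk k Hin). lia.
Qed.

Lemma CL1 l : incr l -> (forall x, In x l -> H x = 0 /\ a < x < b) -> (S (4 * n) <= length l)%nat -> False.
Proof.
  intros Hinc Hr Hlen. destruct l as [|r l']. simpl in Hlen; lia.
  destruct (node_left r) as [k0 [Hk0 Hk0']]. apply Hr; simpl; auto. apply Hr; simpl; auto.
  destruct (chain (length l') l' r (le_n _) Hinc) as [ks [K1 [K2 [K3 [K4 _]]]]].
  { intros x Hx. split. apply Hr; auto. destruct (Hr x Hx); lra. }
  assert (Hnd : NoDup (k0 :: ks)).
  { apply nodup_incr. simpl. split; auto. intros y Hy. apply in_map_iff in Hy.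
    destruct Hy as [k' [E Hk']]. subst. specialize (K4 k' Hk'). lra. }
  apply few_nodes in Hnd. simpl in Hnd, Hlen. lia.
  intros k [E|E]; subst; auto.
Qed.

Lemma CL2 l : (exists k0, (k0 <= 2 * n)%nat /\ T k0 = a) ->
  incr l -> (forall x, In x l -> H x = 0 /\ a < x < b) -> (4 * n <= length l)%nat -> False.
Proof.
  intros [k0 [Hk0 Hk0']] Hinc Hr Hlen.
  assert (Hinc' : incr (a :: l)).
  { simpl; split; auto. intros y Hy; destruct (Hr y Hy); lra. }
  destruct (chain (length l) l a (le_n _) Hinc') as [ks [K1 [K2 [K3 [K4 K5]]]]].
  { intros x [E|Hx]. rewrite <- E. split. apply H_a. lra. split. apply Hr; auto. destruct (Hr x Hx); lra. }
  assert (Hne : l <> nil) by (intro E; subst; simpl in Hlen; lia).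
  assert (Hnd : NoDup (k0 :: ks)).
  { apply nodup_incr. simpl. split; auto. intros y Hy. apply in_map_iff in Hy.
    destruct Hy as [k' [E Hk']]. subst. specialize (K5 Hne k' Hk'). lra. }
  apply few_nodes in Hnd. simpl in Hnd, Hlen. lia.
  intros k [E|E]; subst; auto.
Qed.

Lemma knot_lt i j : (i < j)%nat -> knot a b n i < knot a b n j.
Proof.
  intro Hij. unfold knot. apply lt_INR in Hij.
  assert (0 < INR n) by (apply lt_0_INR; lia).
  unfold Rdiv. apply Rplus_lt_compat_l. rewrite !Rmult_assoc.
  apply Rmult_lt_compat_r; auto. apply Rmult_lt_0_compat. lra. apply Rinv_0_lt_compat; auto.
Qed.
Lemma knot_le i j : (i <= j)%nat -> knot a b n i <= knot a b n j.
Proof. intro Hij. destruct (Nat.eq_dec i j). subst; lra. apply Rlt_le, knot_lt; lia. Qed.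
Lemma knot_0 : knot a b n 0 = a.
Proof. unfold knot. simpl. field. apply not_0_INR. lia. Qed.
Lemma knot_n : knot a b n n = b.
Proof. unfold knot. field. apply not_0_INR. lia. Qed.

Lemma incr_bracket lo l hi : incr (lo :: l ++ hi :: nil) ->
  lo < hi /\ (forall y, In y l -> lo < y < hi) /\ incr l.
Proof.
  revert lo. induction l as [|x l IH]; simpl; intros lo [H1 H2].
  - split; [apply H1; auto| split; auto; intros y []].
  - destruct (IH x H2) as [A [B C]]. assert (lo < x) by auto.
    split; [lra|]. split.
    + intros y [E|E]. subst; lra. specialize (B y E). split; [|lra].
      apply H1. right. apply in_or_app; auto.
    + split; auto. intros y Hy; apply B; auto.
Qed.

Lemma incr_single x : incr (x :: nil).
Proof. simpl. split; auto. intros y []. Qed.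

Lemma bracket_incr lo l hi : incr l -> (forall y, In y l -> lo < y < hi) -> lo < hi ->
  incr (lo :: l ++ hi :: nil).
Proof.
  intros Hi Hin Hlh. change ((forall y, In y (l ++ hi :: nil) -> lo < y) /\ incr (l ++ hi :: nil)).
  split.
  - intros y Hy. apply in_app_or in Hy. destruct Hy as [Hy|[E|[]]]. apply Hin; auto. subst; auto.
  - apply incr_app; [auto | apply incr_single | intros x y Hx [E|[]]; subst; apply Hin; auto].
Qed.

Lemma rolle_list (f f' : R -> R) : (forall x, derivable_pt_lim f x (f' x)) ->
  forall l lo hi, incr (lo :: l ++ hi :: nil) -> f lo = 0 -> f hi = 0 -> (forall x, In x l -> f x = 0) ->
  exists l', incr l' /\ length l' = S (length l) /\ (forall y, In y l' -> lo < y < hi) /\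
    (forall y, In y l' -> f' y = 0).
Proof.
  intro Hd. induction l as [|x l IH]; intros lo hi Hinc Hlo Hhi Hl.
  - destruct (incr_bracket _ _ _ Hinc) as [Hlh _].
    destruct (MVT_cor2 f f' lo hi Hlh (fun c _ => Hd c)) as [c [Hc1 Hc2]].
    exists (c :: nil). split; [apply incr_single|]. split; [reflexivity|]. split.
    + intros y [E|[]]; subst; lra.
    + intros y [E|[]]; subst. rewrite Hlo, Hhi in Hc1.
      assert (0 < hi - lo) by lra. rewrite Rminus_0_r in Hc1. symmetry in Hc1. apply Rmult_integral in Hc1. destruct Hc1; auto. lra.
  - destruct (incr_bracket _ _ _ Hinc) as [Hlh [Hin Hil]].
    assert (Hx : lo < x < hi) by (apply Hin; simpl; auto).
    destruct (MVT_cor2 f f' lo x ltac:(lra) (fun c _ => Hd c)) as [c [Hc1 Hc2]].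
    assert (Hinc2 : incr (x :: l ++ hi :: nil)) by exact (proj2 Hinc).
    destruct (IH x hi Hinc2 (Hl x (or_introl eq_refl)) Hhi (fun y Hy => Hl y (or_intror Hy)))
      as [l'' [A [B [C D]]]].
    exists (c :: l''). split; [split; auto; intros y Hy; specialize (C y Hy); lra|].
    split; [simpl; auto|]. split.
    + intros y [E|E]. subst; lra. specialize (C y E); lra.
    + intros y [E|E]; auto. subst. rewrite Hlo, (Hl x (or_introl eq_refl)) in Hc1.
      assert (0 < x - lo) by lra. rewrite Rminus_0_r in Hc1. symmetry in Hc1. apply Rmult_integral in Hc1. destruct Hc1; auto. lra.
Qed.

Lemma interval_chain al be E : al < be ->
  K0 al = 0 /\ K1 al = 0 /\ K2 al = 0 /\ K3 al = 0 ->
  K0 be = 0 /\ K1 be = 0 /\ K2 be = 0 /\ K3 be = 0 ->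
  incr E -> (forall y, In y E -> al < y < be) -> (forall y, In y E -> K0 y = 0) ->
  exists l, incr l /\ length l = (length E + 4)%nat /\ (forall y, In y l -> al < y < be) /\
    (forall y, In y l -> H y = 0).
Proof.
  intros Hab [A0 [A1 [A2 A3]]] [B0 [B1 [B2 B3]]] HE HEin HE0.
  destruct (rolle_list K0 K1 K0_d E al be (bracket_incr _ _ _ HE HEin Hab) A0 B0 HE0)
    as [l1 [I1 [L1 [N1 R1]]]].
  destruct (rolle_list K1 K2 K1_d l1 al be (bracket_incr _ _ _ I1 N1 Hab) A1 B1 R1)
    as [l2 [I2 [L2 [N2 R2]]]].
  destruct (rolle_list K2 K3 K2_d l2 al be (bracket_incr _ _ _ I2 N2 Hab) A2 B2 R2)
    as [l3 [I3 [L3 [N3 R3]]]].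
  destruct (rolle_list K3 H K3_d l3 al be (bracket_incr _ _ _ I3 N3 Hab) A3 B3 R3)
    as [l4 [I4 [L4 [N4 R4]]]].
  exists l4. split; auto. split; [lia|]. split; auto.
Qed.

Lemma interval_chain_j j E : (1 <= j <= n)%nat ->
  incr E -> (forall y, In y E -> knot a b n (j - 1) < y < knot a b n j) -> (forall y, In y E -> K0 y = 0) ->
  exists l, incr l /\ length l = (length E + 4)%nat /\
    (forall y, In y l -> knot a b n (j - 1) < y < knot a b n j) /\ (forall y, In y l -> H y = 0).
Proof.
  intros Hj. apply interval_chain. apply knot_lt; lia. apply K_knot; lia. apply K_knot; lia.
Qed.

Fixpoint esum (e : nat -> nat) (m : nat) : nat :=
  match m with O => O | S m' => (esum e m' + e (S m'))%nat end.

Lemma assemble (e : nat -> nat) :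
  (forall j, (1 <= j <= n)%nat -> exists l, incr l /\
     (forall y, In y l -> knot a b n (j - 1) < y <= knot a b n j /\ y < b) /\
     (forall y, In y l -> H y = 0) /\ (4 + e j <= length l)%nat) ->
  forall m, (m <= n)%nat -> exists L, incr L /\ (forall y, In y L -> a < y <= knot a b n m /\ y < b) /\
     (forall y, In y L -> H y = 0) /\ (4 * m + esum e m <= length L)%nat.
Proof.
  intros Hj. induction m as [|m IH]; intros Hm.
  - exists nil. split; [simpl; auto|]. split; [intros y []|]. split; [intros y []|]. simpl; lia.
  - destruct IH as [L [A [B [C D]]]]. lia.
    destruct (Hj (S m)) as [l [A' [B' [C' D']]]]. lia.
    replace (S m - 1)%nat with m in * by lia.
    assert (knot a b n 0 <= knot a b n m) by (apply knot_le; lia).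
    assert (knot a b n m <= knot a b n (S m)) by (apply knot_le; lia).
    rewrite knot_0 in *.
    exists (L ++ l). split; [|split; [|split]].
    + apply incr_app; auto. intros x y Hx Hy. destruct (B x Hx). destruct (B' y Hy). lra.
    + intros y Hy. apply in_app_or in Hy. destruct Hy as [Hy|Hy].
      * destruct (B y Hy). lra.
      * destruct (B' y Hy). lra.
    + intros y Hy. apply in_app_or in Hy. destruct Hy as [Hy|Hy]; auto.
    + rewrite length_app. simpl. lia.
Qed.

Lemma four_lists j : (1 <= j <= n)%nat -> exists l, incr l /\
     (forall y, In y l -> knot a b n (j - 1) < y <= knot a b n j /\ y < b) /\
     (forall y, In y l -> H y = 0) /\ (4 <= length l)%nat.
Proof.
  intros Hj. destruct (interval_chain_j j nil Hj) as [l [A [B [C D]]]]; simpl; auto; try (intros y []).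
  assert (knot a b n j <= knot a b n n) by (apply knot_le; lia). rewrite knot_n in *.
  exists l. split; auto. split; [|split; auto; lia].
  intros y Hy. destruct (C y Hy). lra.
Qed.

Lemma five_bad j l : (1 <= j <= n)%nat -> incr l ->
  (forall y, In y l -> knot a b n (j - 1) < y <= knot a b n j /\ y < b) ->
  (forall y, In y l -> H y = 0) -> (5 <= length l)%nat -> False.
Proof.
  intros Hj Hi Hin Hr Hl.
  destruct (assemble (fun i => if Nat.eqb i j then 1%nat else 0%nat)) with (m := n) as [L [A [B [C D]]]]; auto.
  - intros i Hi'. destruct (Nat.eqb_spec i j).
    + subst. exists l. refine (conj Hi (conj Hin (conj Hr _))). lia.
    + destruct (four_lists i Hi') as [l' [A' [B' [C' D']]]]. exists l'.
      refine (conj A' (conj B' (conj C' _))). lia.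
  - assert (Hs : forall m, (j <= m)%nat -> (1 <= esum (fun i => if Nat.eqb i j then 1%nat else 0%nat) m)%nat).
    { induction m; intros Hm. lia. simpl. destruct (Nat.eq_dec j (S m)).
      + subst. rewrite Nat.eqb_refl. lia.
      + assert (j <= m)%nat by lia. specialize (IHm H0). lia. }
    specialize (Hs n ltac:(lia)).
    apply (CL1 L); auto. intros y Hy. split; auto. destruct (B y Hy). rewrite knot_n in *. lra. lia.
Qed.

Lemma K0_noroot j t : (1 <= j <= n)%nat -> knot a b n (j - 1) < t < knot a b n j -> K0 t <> 0.
Proof.
  intros Hj Ht H0.
  destruct (interval_chain_j j (t :: nil) Hj) as [l [A [B [C D]]]].
  - simpl; split; auto. intros y [].
  - intros y [E|[]]; subst; auto.
  - intros y [E|[]]; subst; auto.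
  - apply (five_bad j l Hj A); auto; [|simpl in B; lia].
    intros y Hy. destruct (C y Hy). split. lra. assert (knot a b n j <= knot a b n n) by (apply knot_le; lia).
    rewrite knot_n in *; lra.
Qed.

Lemma H_knot_nz j : (1 <= j < n)%nat -> H (knot a b n j) <> 0.
Proof.
  intros Hj H0.
  destruct (interval_chain_j j nil ltac:(lia)) as [l [A [B [C D]]]]; simpl; auto; try (intros y []).
  assert (knot a b n j < knot a b n n) by (apply knot_lt; lia).
  assert (knot a b n (j - 1) < knot a b n j) by (apply knot_lt; lia).
  rewrite knot_n in *.
  apply (five_bad j (l ++ knot a b n j :: nil) ltac:(lia)).
  - apply incr_app; [auto | apply incr_single |]. intros x y Hx [E|[]]; subst. apply C; auto.
  - intros y Hy. apply in_app_or in Hy. destruct Hy as [Hy|[E|[]]].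
    + destruct (C y Hy). lra.
    + subst. lra.
  - intros y Hy. apply in_app_or in Hy. destruct Hy as [Hy|[E|[]]]; auto. subst; auto.
  - rewrite length_app. simpl. lia.
Qed.

Lemma no_node_a : forall k, (k <= 2 * n)%nat -> a < T k.
Proof.
  intros k Hk. destruct (HT k Hk) as [H1 _]. destruct H1 as [H1|H1]; auto. exfalso.
  destruct (assemble (fun _ => 0%nat)) with (m := n) as [L [A [B [C D]]]]; auto.
  - intros j Hj. destruct (four_lists j Hj) as [l [A [B [C D]]]]. exists l.
    refine (conj A (conj B (conj C _))). lia.
  - apply (CL2 L); eauto. intros y Hy. destruct (B y Hy). split; auto. lra. lia.
Qed.

Lemma min_node : exists s, a < s < knot a b n 1 /\ forall k, (k <= 2 * n)%nat -> s <= T k.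
Proof.
  assert (Hk1 : knot a b n 0 < knot a b n 1) by (apply knot_lt; lia). rewrite knot_0 in Hk1.
  assert (G : forall N, exists s, a < s < knot a b n 1 /\ forall k, (k <= N)%nat -> (k <= 2 * n)%nat -> s <= T k).
  { induction N.
    - assert (Ha0 : a < T 0) by (apply no_node_a; lia).
      exists (Rmin ((a + knot a b n 1) / 2) (T 0)). split.
      + split. apply Rmin_glb_lt; lra. apply Rle_lt_trans with ((a + knot a b n 1) / 2). apply Rmin_l. lra.
      + intros k Hk _. replace k with 0%nat by lia. apply Rmin_r.
    - destruct IHN as [s [Hs1 Hs2]].
      destruct (Compare_dec.le_lt_dec (S N) (2 * n)) as [HN|HN].
      + assert (Ha0 : a < T (S N)) by (apply no_node_a; lia).
        exists (Rmin s (T (S N))). split.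
        * split. apply Rmin_glb_lt; lra. apply Rle_lt_trans with s. apply Rmin_l. lra.
        * intros k Hk Hk'. destruct (Nat.eq_dec k (S N)). subst; apply Rmin_r.
          apply Rle_trans with s. apply Rmin_l. apply Hs2; auto; lia.
      + exists s. split; auto. intros k Hk Hk'. apply Hs2; auto. lia. }
  destruct (G (2 * n)%nat) as [s [A B]]. exists s. split; auto.
Qed.

Lemma pos_left (f f' : R -> R) al u : (forall x, derivable_pt_lim f x (f' x)) -> f al = 0 ->
  (forall x, al < x < u -> 0 < f' x) -> forall t, al < t <= u -> 0 < f t.
Proof.
  intros Hd H0 Hp t Ht. destruct (MVT_cor2 f f' al t ltac:(lra) (fun c _ => Hd c)) as [c [Hc1 Hc2]].
  rewrite H0 in Hc1. assert (0 < f' c) by (apply Hp; lra). assert (0 < t - al) by lra.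
  assert (0 < f' c * (t - al)) by (apply Rmult_lt_0_compat; auto). lra.
Qed.

Lemma right_negd (f f' : R -> R) v be : (forall x, derivable_pt_lim f x (f' x)) -> f be = 0 ->
  (forall x, v < x < be -> f' x < 0) -> forall t, v <= t < be -> 0 < f t.
Proof.
  intros Hd H0 Hp t Ht. destruct (MVT_cor2 f f' t be ltac:(lra) (fun c _ => Hd c)) as [c [Hc1 Hc2]].
  rewrite H0 in Hc1. assert (f' c < 0) by (apply Hp; lra). assert (0 < be - t) by lra.
  assert (f' c * (be - t) < 0) by (apply Rmult_neg_pos; auto) || nra. lra.
Qed.

Lemma right_posd (f f' : R -> R) v be : (forall x, derivable_pt_lim f x (f' x)) -> f be = 0 ->
  (forall x, v < x < be -> 0 < f' x) -> forall t, v <= t < be -> f t < 0.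
Proof.
  intros Hd H0 Hp t Ht. destruct (MVT_cor2 f f' t be ltac:(lra) (fun c _ => Hd c)) as [c [Hc1 Hc2]].
  rewrite H0 in Hc1. assert (0 < f' c) by (apply Hp; lra). assert (0 < be - t) by lra.
  assert (0 < f' c * (be - t)) by (apply Rmult_lt_0_compat; auto). lra.
Qed.

Lemma K0_pos_left al u : K0 al = 0 /\ K1 al = 0 /\ K2 al = 0 /\ K3 al = 0 ->
  (forall x, al < x < u -> 0 < H x) -> forall t, al < t <= u -> 0 < K0 t.
Proof.
  intros [A0 [A1 [A2 A3]]] Hp.
  assert (P3 := pos_left K3 H al u K3_d A3 Hp).
  assert (P2 := pos_left K2 K3 al u K2_d A2 (fun x Hx => P3 x ltac:(lra))).
  assert (P1 := pos_left K1 K2 al u K1_d A1 (fun x Hx => P2 x ltac:(lra))).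
  exact (pos_left K0 K1 al u K0_d A0 (fun x Hx => P1 x ltac:(lra))).
Qed.

Lemma K0_neg_right v be : K0 be = 0 /\ K1 be = 0 /\ K2 be = 0 /\ K3 be = 0 ->
  (forall x, v < x < be -> H x < 0) -> forall t, v <= t < be -> K0 t < 0.
Proof.
  intros [A0 [A1 [A2 A3]]] Hp.
  assert (P3 := right_negd K3 H v be K3_d A3 Hp).
  assert (P2 := right_posd K2 K3 v be K2_d A2 (fun x Hx => P3 x ltac:(lra))).
  assert (P1 := right_negd K1 K2 v be K1_d A1 (fun x Hx => P2 x ltac:(lra))).
  exact (right_posd K0 K1 v be K0_d A0 (fun x Hx => P1 x ltac:(lra))).
Qed.

Lemma K0_spread j : (1 <= j <= n)%nat -> (exists t0, knot a b n (j - 1) < t0 < knot a b n j /\ 0 < K0 t0) ->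
  forall t, knot a b n (j - 1) < t < knot a b n j -> 0 < K0 t.
Proof.
  intros Hj [t0 [Ht0 Hp]] t Ht. destruct (Rlt_dec 0 (K0 t)) as [E|E]; auto. exfalso.
  assert (K0 t <> 0) by (apply (K0_noroot j); auto).
  assert (K0 t < 0) by lra.
  destruct (Rlt_dec t0 t).
  - destruct (root_between K0 t0 t K0_cont r) as [z [Hz1 Hz2]]. nra.
    apply (K0_noroot j z Hj); auto; lra.
  - assert (t < t0) by (destruct (Req_dec t t0); [subst; lra| lra]).
    destruct (root_between K0 t t0 K0_cont H2) as [z [Hz1 Hz2]]. nra.
    apply (K0_noroot j z Hj); auto; lra.
Qed.

Lemma incr_app_lt l1 l2 : incr (l1 ++ l2) -> forall x y, In x l1 -> In y l2 -> x < y.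
Proof.
  induction l1 as [|z l1 IH]; simpl. intros _ x y [].
  intros [H1 H2] x y [E|Hx] Hy. subst. apply H1. apply in_or_app; auto. apply IH; auto.
Qed.

Lemma K0_pos_int : forall j, (1 <= j <= n)%nat ->
  exists t0, knot a b n (j - 1) < t0 < knot a b n j /\ 0 < K0 t0.
Proof.
  induction j as [|j IH]; intros Hj. lia.
  destruct (Nat.eq_dec j 0) as [E|Hj0].
  - subst. simpl. rewrite knot_0. destruct min_node as [s [Hs1 Hs2]].
    exists s. split; auto. apply (K0_pos_left a s); auto.
    rewrite <- knot_0. apply K_knot; lia.
    intros x Hx. rewrite H_left. assert (0 < (x - a) ^ 2) by (apply pow_lt; lra). lra.
    intros k Hk. specialize (Hs2 k Hk). lra. lra.
  - specialize (IH ltac:(lia)). replace (S j - 1)%nat with j by lia.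
    assert (Hpos := K0_spread j ltac:(lia) IH).
    destruct (interval_chain_j (S j) nil ltac:(lia)) as [l1 [A1 [B1 [C1 D1]]]]; simpl; auto; try (intros y []).
    destruct (interval_chain_j j nil ltac:(lia)) as [l0 [A0 [B0 [C0 D0]]]]; simpl; auto; try (intros y []).
    replace (S j - 1)%nat with j in * by lia.
    assert (Hjb : knot a b n (S j) <= b) by (pose proof (knot_le (S j) n ltac:(lia)) as Hkk; rewrite knot_n in Hkk; lra).
    destruct (Rtotal_order (H (knot a b n j)) 0) as [Hneg|[Hz|Hpos']].
    +
      assert (Hne : l0 <> nil) by (intro E; subst; simpl in B0; lia).
      destruct (exists_last Hne) as [l0' [v Ev]].
      assert (Hv : knot a b n (j - 1) < v < knot a b n j) by (apply C0; rewrite Ev; apply in_or_app; simpl; auto).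
      assert (Hnz : forall z, v < z < knot a b n j -> H z <> 0).
      { intros z Hz Hz0. apply (five_bad j (l0 ++ z :: nil) ltac:(lia)).
        - apply incr_app; [auto|apply incr_single|]. intros x y Hx [E|[]]. rewrite <- E.
          rewrite Ev in Hx, A0. apply in_app_or in Hx. destruct Hx as [Hx|[E'|[]]]; [|rewrite <- E'; lra].
          assert (x < v) by (apply (incr_app_lt _ _ A0); simpl; auto). lra.
        - intros y Hy. apply in_app_or in Hy. destruct Hy as [Hy|[E|[]]].
          + destruct (C0 y Hy). assert (knot a b n j <= knot a b n n) by (apply knot_le; lia).
            rewrite knot_n in *. lra.
          + subst. assert (knot a b n j <= knot a b n n) by (apply knot_le; lia).
            rewrite knot_n in *. lra.
        - intros y Hy. apply in_app_or in Hy. destruct Hy as [Hy|[E|[]]]; auto. subst; auto.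
        - rewrite length_app. simpl. lia. }
      assert (Hneg' : forall z, v < z < knot a b n j -> H z < 0).
      { intros z Hz. destruct (Rlt_dec (H z) 0) as [E|E]; auto. exfalso.
        assert (H z > 0) by (assert (H z <> 0) by (apply Hnz; auto); lra).
        destruct (root_between H z (knot a b n j) H_cont ltac:(lra)) as [z' [Hz'1 Hz'2]]. nra.
        apply (Hnz z'); auto; lra. }
      assert (K0 v < 0) by (apply (K0_neg_right v (knot a b n j)); auto; [apply K_knot; lia| lra]).
      assert (0 < K0 v) by (apply Hpos; auto). lra.
    + exfalso. apply (H_knot_nz j); auto; lia.
    + destruct l1 as [|u rest]. simpl in B1; lia.
      assert (Hu : knot a b n j < u < knot a b n (S j)) by (apply C1; simpl; auto).
      assert (Hnz : forall z, knot a b n j < z < u -> H z <> 0).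
      { intros z Hz Hz0. apply (five_bad (S j) (z :: u :: rest) ltac:(lia)).
        - split; auto. intros y [E|Hy]. subst; lra. destruct A1 as [A1 _]. specialize (A1 y Hy). lra.
        - replace (S j - 1)%nat with j by lia. intros y [E|Hy].
          + subst. lra.
          + destruct (C1 y Hy). lra.
        - intros y [E|Hy]; subst; auto.
        - simpl in *. lia. }
      assert (Hp : forall z, knot a b n j < z < u -> 0 < H z).
      { intros z Hz. destruct (Rlt_dec 0 (H z)) as [E|E]; auto. exfalso.
        assert (H z < 0) by (assert (H z <> 0) by (apply Hnz; auto); lra).
        destruct (root_between H (knot a b n j) z H_cont ltac:(lra)) as [z' [Hz'1 Hz'2]]. nra.
        apply (Hnz z'); auto; lra. }
      exists u. split; auto. apply (K0_pos_left (knot a b n j) u); auto. apply K_knot; lia. lra.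
Qed.

Lemma knot_cover t : a <= t <= b -> exists j, (1 <= j <= n)%nat /\ knot a b n (j - 1) <= t <= knot a b n j.
Proof.
  intros Ht.
  assert (G : forall m, (1 <= m <= n)%nat -> t <= knot a b n m ->
    exists j, (1 <= j <= m)%nat /\ knot a b n (j - 1) <= t <= knot a b n j).
  { induction m as [|m IH]; intros Hm Htm. lia.
    destruct (Nat.eq_dec m 0). subst. exists 1%nat. simpl. rewrite knot_0. split; [lia|lra].
    destruct (Rle_dec t (knot a b n m)).
    - destruct (IH ltac:(lia) r) as [j [Hj1 Hj2]]. exists j; split; auto; lia.
    - exists (S m). split. lia. replace (S m - 1)%nat with m by lia. lra. }
  destruct (G n ltac:(lia)) as [j [Hj1 Hj2]]. rewrite knot_n; lra. exists j; split; auto; lia.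
Qed.

Lemma K0_nonneg t : a <= t <= b -> 0 <= K0 t.
Proof.
  intros Ht. destruct (knot_cover t Ht) as [j [Hj [H1 H2]]].
  destruct H1 as [H1|H1]; [destruct H2 as [H2|H2]|].
  - apply Rlt_le, (K0_spread j Hj (K0_pos_int j Hj)); auto.
  - subst. destruct (K_knot j ltac:(lia)) as [E _]. lra.
  - subst. destruct (K_knot (j - 1) ltac:(lia)) as [E _]. lra.
Qed.

Lemma K0_pos_first t : a < t < knot a b n 1 -> 0 < K0 t.
Proof.
  intros Ht. apply (K0_spread 1 ltac:(lia) (K0_pos_int 1 ltac:(lia))). simpl. rewrite knot_0. auto.
Qed.

End Comb.

Lemma isR_FTC (F f : R -> R) a b : (forall x, derivable_pt_lim F x (f x)) -> continuity f ->
  is_RInt f a b (F b - F a).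
Proof.
  intros Hd Hc. apply (is_RInt_derive F f a b).
  - intros x _. apply is_derive_Reals. apply Hd.
  - intros x _. apply continuity_pt_filterlim. apply Hc.
Qed.

Lemma isR_plus (f g : R -> R) a b If Ig : is_RInt f a b If -> is_RInt g a b Ig ->
  is_RInt (fun t => f t + g t) a b (If + Ig).
Proof. intros H1 H2. exact (is_RInt_plus f g a b If Ig H1 H2). Qed.

Lemma isR_scal (f : R -> R) a b k If : is_RInt f a b If -> is_RInt (fun t => k * f t) a b (k * If).
Proof. intros H1. exact (is_RInt_scal f a b k If H1). Qed.

Lemma isR_ext (f g : R -> R) a b I : (forall x, f x = g x) -> is_RInt f a b I -> is_RInt g a b I.
Proof. intros E H1. apply (is_RInt_ext f); auto. Qed.

Lemma isR_sum (W : nat -> R) (F : nat -> R -> R) (I : nat -> R) a b N :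
  (forall k, (k <= N)%nat -> is_RInt (F k) a b (I k)) ->
  is_RInt (fun t => sum_f_R0 (fun k => W k * F k t) N) a b (sum_f_R0 (fun k => W k * I k) N).
Proof.
  induction N; intros Hk.
  - simpl. apply isR_scal. apply Hk. lia.
  - simpl. apply isR_plus. apply IHN; intros; apply Hk; lia. apply isR_scal; apply Hk; lia.
Qed.

Lemma RInt_Riemann (g : R -> R) a b v : integral_is g a b v -> RInt g a b = v.
Proof. intros [pr E]. rewrite (RInt_Reals g a b pr). auto. Qed.

Lemma dpl_div (f : R -> R) x l k : derivable_pt_lim f x l -> derivable_pt_lim (fun y => f y / k) x (l / k).
Proof.
  intro Hf. replace (l / k) with (/ k * l) by (unfold Rdiv; ring).
  apply (dlim_loc _ (mult_real_fct (/ k) f) x _ 1). lra.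
  intros y _. unfold mult_real_fct. unfold Rdiv; ring.
  apply derivable_pt_lim_scal; auto.
Qed.

Definition gfun (p : nat) (c x : R) : R := pp (x - c) ^ p.

Lemma gfun_deriv m c x : derivable_pt_lim (gfun (S (S m)) c) x (INR (S (S m)) * gfun (S m) c x).
Proof.
  unfold gfun.
  assert (Hc : derivable_pt_lim (fun x => x - c) x 1).
  { apply is_derive_Reals. auto_derive; auto. }
  assert (H := derivable_pt_lim_comp (fun x => x - c) (fun y => pp y ^ S (S m)) x 1 _
    Hc (pp_pow_deriv m (x - c))).
  unfold comp in H. rewrite Rmult_1_r in H. exact H.
Qed.

Lemma gfun_cont p c : continuity (gfun p c).
Proof.
  intro t. unfold gfun. apply (cont_pt_pow (fun t => pp (t - c))).
  apply (continuity_pt_comp (fun t => t - c) pp).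
  apply continuity_pt_minus. apply derivable_continuous_pt, derivable_pt_id.
  apply continuity_pt_const; intros ? ?; auto. apply pp_cont.
Qed.

Definition coefs (p : nat) (c : R) (i : nat) : R :=
  match p, i with
  | 0%nat, 0%nat => 1
  | 1%nat, 0%nat => - c | 1%nat, 1%nat => 1
  | 2%nat, 0%nat => c ^ 2 | 2%nat, 1%nat => -2 * c | 2%nat, 2%nat => 1
  | 3%nat, 0%nat => - c ^ 3 | 3%nat, 1%nat => 3 * c ^ 2 | 3%nat, 2%nat => -3 * c | 3%nat, 3%nat => 1
  | 4%nat, 0%nat => c ^ 4 | 4%nat, 1%nat => -4 * c ^ 3 | 4%nat, 2%nat => 6 * c ^ 2 | 4%nat, 3%nat => -4 * c | 4%nat, 4%nat => 1
  | 5%nat, 0%nat => - c ^ 5 | 5%nat, 1%nat => 5 * c ^ 4 | 5%nat, 2%nat => -10 * c ^ 3 | 5%nat, 3%nat => 10 * c ^ 2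
  | 5%nat, 4%nat => -5 * c | 5%nat, 5%nat => 1
  | _, _ => 0
  end.

Lemma coefs_ok p c t : (p <= 5)%nat -> (t - c) ^ p = sum_f_R0 (fun i => coefs p c i * t ^ i) 5.
Proof.
  intro Hp. destruct p as [|[|[|[|[|[|p]]]]]]; try lia; simpl; ring.
Qed.

Lemma zero_poly t : 0 = sum_f_R0 (fun i => 0 * t ^ i) 5.
Proof. simpl; ring. Qed.

Lemma gfun_S51 a b n p j : a < b -> (1 <= n)%nat -> (2 <= p <= 5)%nat -> (j <= n)%nat ->
  in_S51 a b n (gfun p (knot a b n j)).
Proof.
  intros hab hn Hp Hj. split.
  - destruct p as [|[|p]]; try lia.
    exists (fun x => INR (S (S p)) * gfun (S p) (knot a b n j) x). split.
    + intro x. apply gfun_deriv.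
    + intro x. apply continuity_pt_mult. apply continuity_pt_const; intros ? ?; auto. apply gfun_cont.
  - intros k Hk. destruct (Compare_dec.le_lt_dec j (k - 1)) as [Hjk|Hjk].
    + exists (coefs p (knot a b n j)). intros t Ht.
      assert (knot a b n j <= knot a b n (k - 1)) by (apply knot_le; auto).
      unfold gfun. rewrite pp_pos by lra. apply coefs_ok; lia.
    + exists (fun _ => 0). intros t Ht.
      assert (knot a b n k <= knot a b n j) by (apply knot_le; auto; lia).
      unfold gfun. rewrite pp_neg by lra. rewrite pow_i by lia. apply zero_poly.
Qed.

Lemma poly_S51 a b n p c : (p <= 5)%nat -> in_S51 a b n (fun x => (x - c) ^ p).
Proof.
  intros Hp. split.
  - exists (fun x => INR p * (x - c) ^ Init.Nat.pred p). split.
    + intro x. apply is_derive_Reals. auto_derive; auto. unfold Rminus; ring.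
    + intro x. apply continuity_pt_mult. apply continuity_pt_const; intros ? ?; auto.
      apply (cont_pt_pow (fun x => x - c)). apply continuity_pt_minus.
      apply derivable_continuous_pt, derivable_pt_id. apply continuity_pt_const; intros ? ?; auto.
  - intros k Hk. exists (coefs p c). intros t Ht. apply coefs_ok; auto.
Qed.

Lemma RInt_gfun m c a b : a <= c <= b ->
  RInt (gfun (S (S m)) c) a b = (b - c) ^ (S (S (S m))) / INR (S (S (S m))).
Proof.
  intros Hc. apply is_RInt_unique.
  assert (HF := isR_FTC (fun x => gfun (S (S (S m))) c x / INR (S (S (S m)))) (gfun (S (S m)) c) a b).
  replace ((b - c) ^ S (S (S m)) / INR (S (S (S m)))) with
    (gfun (S (S (S m))) c b / INR (S (S (S m))) - gfun (S (S (S m))) c a / INR (S (S (S m)))).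
  apply HF.
  - intro x. replace (gfun (S (S m)) c x) with ((INR (S (S (S m))) * gfun (S (S m)) c x) / INR (S (S (S m)))).
    apply dpl_div. apply gfun_deriv.
    field. apply not_0_INR; lia.
  - apply gfun_cont.
  - unfold gfun. rewrite (pp_pos (b - c)), (pp_neg (a - c)) by lra. rewrite pow_i by lia. field.
    apply not_0_INR; lia.
Qed.

Lemma RInt_poly p c a b : RInt (fun x => (x - c) ^ p) a b = (b - c) ^ S p / INR (S p) - (a - c) ^ S p / INR (S p).
Proof.
  apply is_RInt_unique. apply (isR_FTC (fun x => (x - c) ^ S p / INR (S p))).
  - intro x. apply is_derive_Reals. auto_derive; auto.
    change (match p with 0%nat => 1 | S _ => INR p + 1 end) with (INR (S p)).
    unfold Rminus. field. apply not_0_INR; lia.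
  - intro x. apply (cont_pt_pow (fun x => x - c)). apply continuity_pt_minus.
    apply derivable_continuous_pt, derivable_pt_id. apply continuity_pt_const; intros ? ?; auto.
Qed.

Lemma quad_eq n tau w g : quad_sum (2 * n + 1) tau w g =
  sum_f_R0 (fun k => w (S k) * g (tau (S k))) (2 * n).
Proof. unfold quad_sum. replace (2 * n + 1 - 1)%nat with (2 * n)%nat by lia. reflexivity. Qed.

Lemma exact_RInt a b n tau w g : gauss_rule_S51 a b n tau w -> in_S51 a b n g ->
  RInt g a b = sum_f_R0 (fun k => w (S k) * g (tau (S k))) (2 * n).
Proof.
  intros [_ [_ [_ Hex]]] Hg. rewrite <- quad_eq. apply RInt_Riemann. apply Hex; auto.
Qed.

Lemma gauss_facts a b n tau w : a < b -> (1 <= n)%nat -> gauss_rule_S51 a b n tau w ->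
  let T := fun k => tau (S k) in let W := fun k => w (S k) in
  (forall k, (k <= 2 * n)%nat -> a <= T k <= b) /\
  (forall k, (k <= 2 * n)%nat -> 0 < W k) /\
  (forall p, (p <= 5)%nat -> sum_f_R0 (fun k => W k * (T k - a) ^ p) (2 * n) = (b - a) ^ S p / INR (S p)) /\
  (forall j p, (j <= n)%nat -> (2 <= p <= 5)%nat ->
     Sp n T W p (knot a b n j) = (b - knot a b n j) ^ (S p) / INR (S p)).
Proof.
  intros hab hn HG. cbv zeta. split; [|split; [|split]].
  - intros k Hk. destruct HG as [H1 _]. apply H1. lia.
  - intros k Hk. destruct HG as [_ [_ [H1 _]]]. apply H1. lia.
  - intros p Hp. rewrite <- (exact_RInt a b n tau w _ HG (poly_S51 a b n p a Hp)).
    rewrite RInt_poly. replace (a - a) with 0 by ring. rewrite pow_i by lia. unfold Rdiv. ring.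
  - intros j p Hj Hp. unfold Sp, kp.
    assert (E := exact_RInt a b n tau w _ HG (gfun_S51 a b n p j hab hn Hp Hj)).
    unfold gfun in E at 2. rewrite <- E.
    destruct p as [|[|m]]; try lia. apply RInt_gfun.
    assert (K1 := knot_le a b n hab hn 0 j ltac:(lia)).
    assert (K2 := knot_le a b n hab hn j n Hj).
    rewrite knot_0 in K1 by auto. rewrite knot_n in K2 by auto. lra.
Qed.

Lemma isR_chasles (f : R -> R) a b c I1 I2 : is_RInt f a b I1 -> is_RInt f b c I2 ->
  is_RInt f a c (I1 + I2).
Proof. intros H1 H2. exact (is_RInt_Chasles f a b c I1 I2 H1 H2). Qed.

Lemma isR_ext_in (f g : R -> R) a b I : a <= b -> (forall x, a < x < b -> f x = g x) ->
  is_RInt f a b I -> is_RInt g a b I.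
Proof.
  intros Hab E H. apply (is_RInt_ext f); auto.
  intros x Hx. rewrite Rmin_left in Hx by lra. rewrite Rmax_right in Hx by lra. apply E; auto.
Qed.

Lemma dpl_plus' (u v : R -> R) t du dv : derivable_pt_lim u t du -> derivable_pt_lim v t dv ->
  derivable_pt_lim (fun s => u s + v s) t (du + dv).
Proof.
  intros Hu Hv. apply (dlim_loc _ (plus_fct u v) t _ 1). lra. intros; reflexivity.
  apply derivable_pt_lim_plus; auto.
Qed.

Lemma dpl_mult' (u v : R -> R) t du dv : derivable_pt_lim u t du -> derivable_pt_lim v t dv ->
  derivable_pt_lim (fun s => u s * v s) t (du * v t + u t * dv).
Proof.
  intros Hu Hv. apply (dlim_loc _ (mult_fct u v) t _ 1). lra. intros; reflexivity.
  apply derivable_pt_lim_mult; auto.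
Qed.

Lemma dpl_ext (f : R -> R) t l l' : l = l' -> derivable_pt_lim f t l -> derivable_pt_lim f t l'.
Proof. intros E H; subst; auto. Qed.

Lemma dterm (u : R -> R) du c m C t : derivable_pt_lim u t du ->
  derivable_pt_lim (fun s => C * u s * (c - s) ^ S m) t
    (C * du * (c - t) ^ S m - C * u t * INR (S m) * (c - t) ^ m).
Proof.
  intro Hu.
  assert (Hp : derivable_pt_lim (fun s => (c - s) ^ S m) t (- (INR (S m) * (c - t) ^ m))).
  { apply is_derive_Reals. auto_derive; auto.
    change (match m with 0%nat => 1 | S _ => INR m + 1 end) with (INR (S m)). unfold Rminus; ring. }
  assert (Hc : derivable_pt_lim (fun s => C * u s) t (C * du)).
  { apply (dlim_loc _ (mult_real_fct C u) t _ 1). lra. intros; reflexivity.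
    apply derivable_pt_lim_scal; auto. }
  eapply dpl_ext; [|apply (dpl_mult' _ _ t _ _ Hc Hp)]. ring.
Qed.

Section Peano.
Variables (d : nat -> R -> R).
Hypothesis Hd : forall k x, (k < 6)%nat -> derivable_pt_lim (d k) x (d (S k) x).
Hypothesis Hc6 : continuity (d 6%nat).

Lemma d_cont k : (k <= 6)%nat -> continuity (d k).
Proof.
  intros Hk x. destruct (Nat.eq_dec k 6). subst; apply Hc6.
  apply derivable_continuous_pt. exists (d (S k) x). apply Hd. lia.
Qed.

Definition psi (c s : R) : R :=
  d 0%nat s + 1 * d 1%nat s * (c - s) ^ 1 + / 2 * d 2%nat s * (c - s) ^ 2 + / 6 * d 3%nat s * (c - s) ^ 3
  + / 24 * d 4%nat s * (c - s) ^ 4 + / 120 * d 5%nat s * (c - s) ^ 5.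

Lemma psi_d c t : derivable_pt_lim (psi c) t (/ 120 * d 6%nat t * (c - t) ^ 5).
Proof.
  unfold psi.
  assert (D0 := Hd 0 t ltac:(lia)).
  assert (D1 := dterm _ _ c 0 1 t (Hd 1 t ltac:(lia))).
  assert (D2 := dterm _ _ c 1 (/ 2) t (Hd 2 t ltac:(lia))).
  assert (D3 := dterm _ _ c 2 (/ 6) t (Hd 3 t ltac:(lia))).
  assert (D4 := dterm _ _ c 3 (/ 24) t (Hd 4 t ltac:(lia))).
  assert (D5 := dterm _ _ c 4 (/ 120) t (Hd 5 t ltac:(lia))).
  eapply dpl_ext; [|apply (dpl_plus' _ _ t _ _ (dpl_plus' _ _ t _ _ (dpl_plus' _ _ t _ _
    (dpl_plus' _ _ t _ _ (dpl_plus' _ _ t _ _ D0 D1) D2) D3) D4) D5)].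
  simpl INR. field.
Qed.

Definition Psi (s : R) (bb : R) : R :=
  1 * d 0%nat s * (bb - s) ^ 1 + / 2 * d 1%nat s * (bb - s) ^ 2 + / 6 * d 2%nat s * (bb - s) ^ 3
  + / 24 * d 3%nat s * (bb - s) ^ 4 + / 120 * d 4%nat s * (bb - s) ^ 5 + / 720 * d 5%nat s * (bb - s) ^ 6.

Lemma Psi_d bb t : derivable_pt_lim (fun s => Psi s bb) t (/ 720 * d 6%nat t * (bb - t) ^ 6 - d 0%nat t).
Proof.
  unfold Psi.
  assert (D1 := dterm _ _ bb 0 1 t (Hd 0 t ltac:(lia))).
  assert (D2 := dterm _ _ bb 1 (/ 2) t (Hd 1 t ltac:(lia))).
  assert (D3 := dterm _ _ bb 2 (/ 6) t (Hd 2 t ltac:(lia))).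
  assert (D4 := dterm _ _ bb 3 (/ 24) t (Hd 3 t ltac:(lia))).
  assert (D5 := dterm _ _ bb 4 (/ 120) t (Hd 4 t ltac:(lia))).
  assert (D6 := dterm _ _ bb 5 (/ 720) t (Hd 5 t ltac:(lia))).
  eapply dpl_ext; [|apply (dpl_plus' _ _ t _ _ (dpl_plus' _ _ t _ _ (dpl_plus' _ _ t _ _
    (dpl_plus' _ _ t _ _ (dpl_plus' _ _ t _ _ D1 D2) D3) D4) D5) D6)].
  simpl INR. field.
Qed.

Lemma cont_mul_pow (g : R -> R) c m : continuity g -> continuity (fun s => g s * (c - s) ^ m).
Proof.
  intros Hg x. apply (continuity_pt_mult g (fun s => (c - s) ^ m)). apply Hg.
  apply (cont_pt_pow (fun s => c - s)). apply continuity_pt_minus.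
  apply continuity_pt_const; intros ? ?; auto. apply derivable_continuous_pt, derivable_pt_id.
Qed.

Definition tay (a c : R) : R := psi c a.

Lemma peano_node a b c : a <= c <= b ->
  is_RInt (fun s => kp 5 c s * d 6%nat s) a b (120 * (d 0%nat c - tay a c)).
Proof.
  intros Hc.
  assert (I1 : is_RInt (fun s => / 120 * d 6%nat s * (c - s) ^ 5) a c (psi c c - psi c a)).
  { apply isR_FTC. apply psi_d. intro x.
    apply (cont_mul_pow (fun s => / 120 * d 6%nat s)). intro y. apply continuity_pt_mult.
    apply continuity_pt_const; intros ? ?; auto. apply Hc6. }
  assert (I1' : is_RInt (fun s => kp 5 c s * d 6%nat s) a c (120 * (psi c c - psi c a))).
  { apply (isR_ext_in (fun s => 120 * (/ 120 * d 6%nat s * (c - s) ^ 5))). lra.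
    - intros x Hx. unfold kp. rewrite pp_pos by lra. field.
    - apply isR_scal; auto. }
  assert (I2 : is_RInt (fun s => kp 5 c s * d 6%nat s) c b 0).
  { apply (isR_ext_in (fun _ => 0)). lra.
    - intros x Hx. unfold kp. rewrite pp_neg by lra. simpl; ring.
    - assert (Ic : is_RInt (fun _ : R => 0) c b (scal (b - c) 0)) by exact (@is_RInt_const R_NormedModule c b 0).
      change (scal (b - c) 0) with ((b - c) * 0) in Ic. rewrite Rmult_0_r in Ic. exact Ic. }
  assert (E : psi c c = d 0%nat c) by (unfold psi; simpl; ring).
  rewrite E in I1'. unfold tay.
  replace (120 * (d 0%nat c - psi c a)) with (120 * (d 0%nat c - psi c a) + 0) by ring.
  apply (isR_chasles _ a c b); auto.
Qed.

Lemma peano_main a b :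
  is_RInt (fun s => / 720 * d 6%nat s * (b - s) ^ 6) a b (RInt (d 0%nat) a b - Psi a b).
Proof.
  assert (I1 : is_RInt (fun s => / 720 * d 6%nat s * (b - s) ^ 6 - d 0%nat s) a b (Psi b b - Psi a b)).
  { apply (isR_FTC (fun s => Psi s b)). apply Psi_d. intro x.
    apply continuity_pt_minus.
    apply (cont_mul_pow (fun s => / 720 * d 6%nat s)). intro y. apply continuity_pt_mult.
    apply continuity_pt_const; intros ? ?; auto. apply Hc6. apply d_cont; lia. }
  assert (I0 : is_RInt (d 0%nat) a b (RInt (d 0%nat) a b)).
  { apply (@RInt_correct R_CompleteNormedModule). apply (@ex_RInt_continuous R_CompleteNormedModule). intros z _. apply continuity_pt_filterlim.
    apply d_cont; lia. }
  assert (E : Psi b b = 0) by (unfold Psi; simpl; ring).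
  rewrite E in I1.
  apply (isR_ext (fun s => (/ 720 * d 6%nat s * (b - s) ^ 6 - d 0%nat s) + d 0%nat s)).
  intros; ring.
  replace (RInt (d 0%nat) a b - Psi a b) with ((0 - Psi a b) + RInt (d 0%nat) a b) by ring.
  apply isR_plus; auto.
Qed.

End Peano.

Lemma sum6 (W u : nat -> R) c0 c1 c2 c3 c4 c5 N :
  sum_f_R0 (fun k => W k * (c0 + c1 * u k ^ 1 + c2 * u k ^ 2 + c3 * u k ^ 3 + c4 * u k ^ 4 + c5 * u k ^ 5)) N =
  c0 * sum_f_R0 (fun k => W k * u k ^ 0) N + c1 * sum_f_R0 (fun k => W k * u k ^ 1) N
  + c2 * sum_f_R0 (fun k => W k * u k ^ 2) N + c3 * sum_f_R0 (fun k => W k * u k ^ 3) N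
  + c4 * sum_f_R0 (fun k => W k * u k ^ 4) N + c5 * sum_f_R0 (fun k => W k * u k ^ 5) N.
Proof. induction N; cbn [sum_f_R0]; [ring|]. rewrite IHN. ring. Qed.

Lemma isR_kp5 a b c : a <= c <= b -> is_RInt (kp 5 c) a b ((c - a) ^ 6 / 6).
Proof.
  intros Hc.
  replace ((c - a) ^ 6 / 6) with ((- kp 6 c b / 6) - (- kp 6 c a / 6)).
  - apply (isR_FTC (fun x => - kp 6 c x / 6)).
    + intro x. replace (kp 5 c x) with (- (- INR 6 * kp 5 c x) / 6) by (simpl INR; field).
      apply dpl_div. apply (dlim_loc _ (opp_fct (kp 6 c)) x _ 1). lra. intros; reflexivity.
      apply derivable_pt_lim_opp. apply kp_deriv.
    + apply kp_cont.
  - unfold kp. rewrite (pp_neg (c - b)), (pp_pos (c - a)) by lra. simpl; field.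
Qed.

Lemma RInt_zero a b : RInt (fun _ : R => 0) a b = 0.
Proof.
  rewrite (@RInt_const R_CompleteNormedModule). apply Rmult_0_r.
Qed.

Lemma ex_cont (f : R -> R) a b : continuity f -> ex_RInt f a b.
Proof.
  intros Hf. apply (@ex_RInt_continuous R_CompleteNormedModule). intros z _.
  apply continuity_pt_filterlim. apply Hf.
Qed.

Lemma alg_id (I s c : R) : c <> 0 -> I = s + c * ((I - s) / c).
Proof. intro; field; auto. Qed.

Lemma core a b n (T W : nat -> R) : a < b -> (1 <= n)%nat ->
  (forall k, (k <= 2 * n)%nat -> a <= T k <= b) ->
  (forall k, (k <= 2 * n)%nat -> 0 < W k) ->
  (forall p, (p <= 5)%nat -> sum_f_R0 (fun k => W k * (T k - a) ^ p) (2 * n) = (b - a) ^ S p / INR (S p)) ->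
  (forall j p, (j <= n)%nat -> (2 <= p <= 5)%nat ->
     Sp n T W p (knot a b n j) = (b - knot a b n j) ^ (S p) / INR (S p)) ->
  0 < (b - a) ^ 7 / 5040 - / 720 * sum_f_R0 (fun k => W k * (T k - a) ^ 6) (2 * n) /\
  forall d : nat -> R -> R, (forall k x, (k < 6)%nat -> derivable_pt_lim (d k) x (d (S k) x)) ->
    continuity (d 6%nat) ->
    exists xi, a <= xi <= b /\
      RInt (d 0%nat) a b = sum_f_R0 (fun k => W k * d 0%nat (T k)) (2 * n) +
        ((b - a) ^ 7 / 5040 - / 720 * sum_f_R0 (fun k => W k * (T k - a) ^ 6) (2 * n)) * d 6%nat xi.
Proof.
  intros hab hn HT HW HM ES.
  assert (E0 : sum_f_R0 (fun k => W k) (2 * n) = b - a).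
  { rewrite <- (sum_eq (fun k => W k * (T k - a) ^ 0)) by (intros; simpl; ring).
    rewrite HM by lia. simpl. field. }
  assert (E1 : sum_f_R0 (fun k => W k * (T k - a)) (2 * n) = (b - a) ^ 2 / 2).
  { rewrite <- (sum_eq (fun k => W k * (T k - a) ^ 1)) by (intros; simpl; ring).
    rewrite HM by lia. simpl. field. }
  set (c := (b - a) ^ 7 / 5040 - / 720 * sum_f_R0 (fun k => W k * (T k - a) ^ 6) (2 * n)).
  assert (HK : is_RInt (K0 b n T W) a b c).
  { assert (I1 : is_RInt (fun s => (b - s) ^ 6) a b ((b - a) ^ 7 / 7)).
    { replace ((b - a) ^ 7 / 7) with ((- (b - b) ^ 7 / 7) - (- (b - a) ^ 7 / 7)) by (simpl; field).
      apply (isR_FTC (fun s => - (b - s) ^ 7 / 7)).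
      - intro x. apply is_derive_Reals. auto_derive; auto. simpl; field.
      - intro x. apply (cont_pt_pow (fun s => b - s)). apply continuity_pt_minus.
        apply continuity_pt_const; intros ? ?; auto. apply derivable_continuous_pt, derivable_pt_id. }
    assert (I2 := isR_sum W (fun k => kp 5 (T k)) (fun k => (T k - a) ^ 6 / 6) a b (2 * n)
      (fun k Hk => isR_kp5 a b (T k) (HT k Hk))).
    assert (I3 := isR_plus _ _ a b _ _ (isR_scal _ a b (/ 720) _ I1) (isR_scal _ a b (- / 120) _ I2)).
    replace c with (/ 720 * ((b - a) ^ 7 / 7) + - / 120 * sum_f_R0 (fun k => W k * ((T k - a) ^ 6 / 6)) (2 * n)).
    exact I3.
    unfold c. rewrite (sum_eq _ (fun k => (fun k => W k * (T k - a) ^ 6) k * / 6)) by (intros; unfold Rdiv; ring).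
    rewrite <- scal_sum. field. }
  assert (HKc := K0_cont b n T W).
  assert (Hnn := K0_nonneg a b n T W hab hn HT E0 E1 ES).
  assert (Hpos := K0_pos_first a b n T W hab hn HT E0 E1 ES).
  assert (Hx1 : a < knot a b n 1 <= b).
  { split. rewrite <- (knot_0 a b n hn) at 1. apply knot_lt; auto.
    rewrite <- (knot_n a b n hn) at 2. apply knot_le; auto. }
  assert (Hc : 0 < c).
  { rewrite <- (is_RInt_unique _ _ _ _ HK).
    rewrite <- (RInt_Chasles (K0 b n T W) a (knot a b n 1) b) by (apply ex_cont; auto).
    change (plus ?x ?y) with (x + y).
    assert (0 < RInt (K0 b n T W) a (knot a b n 1)).
    { rewrite <- (RInt_zero a (knot a b n 1)). apply RInt_lt; try lra.
      - intros x _. apply continuity_pt_filterlim. apply HKc.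
      - intros x _. apply continuity_pt_filterlim. apply continuity_const. intros ? ?; auto.
      - intros x Hx. apply Hpos; lra. }
    assert (0 <= RInt (K0 b n T W) (knot a b n 1) b).
    { rewrite <- (RInt_zero (knot a b n 1) b). apply RInt_le; try lra.
      apply ex_cont. apply continuity_const. intros ? ?; auto. apply ex_cont; auto.
      intros x Hx. apply Hnn. lra. }
    lra. }
  split; auto.
  intros d Hd Hc6.
  set (Ef := RInt (d 0%nat) a b - sum_f_R0 (fun k => W k * d 0%nat (T k)) (2 * n)).
  assert (HP : is_RInt (fun s => K0 b n T W s * d 6%nat s) a b Ef).
  { assert (I1 := peano_main d Hd Hc6 a b).
    assert (I2 := isR_sum W (fun k s => kp 5 (T k) s * d 6%nat s)
      (fun k => 120 * (d 0%nat (T k) - tay d a (T k))) a b (2 * n)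
      (fun k Hk => peano_node d Hd Hc6 a b (T k) (HT k Hk))).
    assert (I3 := isR_plus _ _ a b _ _ I1 (isR_scal _ a b (- / 120) _ I2)).
    replace Ef with (RInt (d 0%nat) a b - Psi d a b +
      - / 120 * sum_f_R0 (fun k => W k * (120 * (d 0%nat (T k) - tay d a (T k)))) (2 * n)).
    { eapply isR_ext; [|exact I3]. intro x. cbv beta. unfold K0, Sp.
      assert (Es : sum_f_R0 (fun k => W k * kp 5 (T k) x) (2 * n) * d 6%nat x =
        sum_f_R0 (fun k => W k * (kp 5 (T k) x * d 6%nat x)) (2 * n)).
      { rewrite Rmult_comm, scal_sum. apply sum_eq; intros; ring. }
      rewrite <- Es. ring. }
    unfold Ef.
    rewrite (sum_eq _ (fun k => 120 * (W k * d 0%nat (T k)) - 120 * (W k * tay d a (T k)))) by (intros; ring).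
    rewrite minus_sum.
    assert (ET : sum_f_R0 (fun k => W k * tay d a (T k)) (2 * n) = Psi d a b).
    { unfold tay, psi.
      rewrite (sum6 W (fun k => T k - a)). rewrite !HM by lia. unfold Psi. simpl INR. field. }
    assert (EA : forall (A : nat -> R), sum_f_R0 (fun k => 120 * A k) (2 * n) = 120 * sum_f_R0 A (2 * n)).
    { intro A. rewrite scal_sum. apply sum_eq. intros; ring. }
    rewrite (EA (fun k => W k * d 0%nat (T k))), (EA (fun k => W k * tay d a (T k))), ET. field. }
  assert (Hd6 : forall x, a <= x <= b -> continuity_pt (d 6%nat) x) by (intros; apply Hc6).
  destruct (continuity_ab_min (d 6%nat) a b ltac:(lra) Hd6) as [xm [Hm1 Hm2]].
  destruct (continuity_ab_maj (d 6%nat) a b ltac:(lra) Hd6) as [xM [HM1 HM2]].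
  assert (Hcont2 : continuity (fun s => K0 b n T W s * d 6%nat s)).
  { intro x. apply continuity_pt_mult; auto. }
  assert (Hlow : d 6%nat xm * c <= Ef).
  { rewrite <- (is_RInt_unique _ _ _ _ HP).
    rewrite <- (is_RInt_unique _ _ _ _ (isR_scal _ a b (d 6%nat xm) _ HK)).
    apply RInt_le; try lra.
    apply ex_cont. intro x. apply continuity_pt_mult; auto. apply continuity_pt_const; intros ? ?; auto.
    apply ex_cont; auto.
    intros x Hx. assert (0 <= K0 b n T W x) by (apply Hnn; lra). assert (d 6%nat xm <= d 6%nat x) by (apply Hm1; lra).
    nra. }
  assert (Hup : Ef <= d 6%nat xM * c).
  { rewrite <- (is_RInt_unique _ _ _ _ HP).
    rewrite <- (is_RInt_unique _ _ _ _ (isR_scal _ a b (d 6%nat xM) _ HK)).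
    apply RInt_le; try lra.
    apply ex_cont; auto.
    apply ex_cont. intro x. apply continuity_pt_mult; auto. apply continuity_pt_const; intros ? ?; auto.
    intros x Hx. assert (0 <= K0 b n T W x) by (apply Hnn; lra). assert (d 6%nat x <= d 6%nat xM) by (apply HM1; lra).
    nra. }
  assert (Hmm : d 6%nat xm <= d 6%nat xM) by (apply Hm1; lra).
  assert (Hv1 : d 6%nat xm <= Ef / c) by (apply Rmult_le_reg_r with c; auto; unfold Rdiv; rewrite Rmult_assoc, Rinv_l; lra).
  assert (Hv2 : Ef / c <= d 6%nat xM) by (apply Rmult_le_reg_r with c; auto; unfold Rdiv; rewrite Rmult_assoc, Rinv_l; lra).
  destruct (IVT_gen (d 6%nat) xm xM (Ef / c) Hc6) as [xi [Hxi1 Hxi2]].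
  { rewrite Rmin_left, Rmax_right; lra. }
  exists xi. split.
  - split.
    + apply Rle_trans with (Rmin xm xM); [|lra]. apply Rmin_glb; lra.
    + apply Rle_trans with (Rmax xm xM); [lra|]. apply Rmax_lub; lra.
  - rewrite Hxi2. unfold Ef. apply alg_id. lra.
Qed.

Theorem theorem2 (a b : R) (n : nat) (tau w : nat -> R) :
  a < b -> (1 <= n)%nat ->
  gauss_rule_S51 a b n tau w ->
  0 < c_err a b n tau w /\
  forall (f : R -> R) (d : nat -> R -> R),
    Cm_derivs 6 f d ->
    exists xi, a <= xi <= b /\
      integral_is f a b (quad_sum (2 * n + 1) tau w f + c_err a b n tau w * d 6%nat xi).
Proof.
  intros hab hn HG.
  pose proof (gauss_facts a b n tau w hab hn HG) as GF. cbv zeta in GF.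
  destruct GF as [HT [HW [HM ES]]].
  destruct (core a b n (fun k => tau (S k)) (fun k => w (S k)) hab hn HT HW HM ES) as [Hc Hmain].
  assert (Ec : c_err a b n tau w = (b - a) ^ 7 / 5040 -
    / 720 * sum_f_R0 (fun k => w (S k) * (tau (S k) - a) ^ 6) (2 * n)).
  { unfold c_err. rewrite quad_eq. reflexivity. }
  split. rewrite Ec; exact Hc.
  intros f d [Hd0 [Hd Hc6]].
  destruct (Hmain d Hd Hc6) as [xi [Hxi HR]].
  exists xi. split; auto.
  assert (Hfc : forall x, continuity_pt f x).
  { intro x. apply continuity_pt_ext with (f := d 0%nat). auto.
    apply derivable_continuous_pt. exists (d 1%nat x). apply Hd. lia. }
  assert (pr : Riemann_integrable f a b).
  { apply continuity_implies_RiemannInt. lra. intros; apply Hfc. }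
  exists pr. rewrite <- (RInt_Reals f a b pr).
  rewrite (RInt_ext f (d 0%nat) a b) by (intros; symmetry; apply Hd0).
  rewrite quad_eq, Ec.
  rewrite (sum_eq (fun k => w (S k) * f (tau (S k))) (fun k => w (S k) * d 0%nat (tau (S k))))
    by (intros; rewrite Hd0; auto).
  exact HR.
Qed.
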